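(* Assume Dickson's conjecture. Then the set \[ \left\{ \frac{\varphi(p+1)}{\varphi(p)} \,:\, p \text{ and } p+2 \text{ are both prime} \right\} \] is dense in $\left[0,\tfrac{1}{3}\right]$.
   Context: $\varphi$ denotes Euler's totient function. Dickson's conjecture is the following assertion: if $f_1,\dots,f_k \in \mathbb{Z}[t]$ are linear polynomials with positive leading coefficients and the product $f=f_1f_2\cdots f_k$ does not vanish identically modulo any prime (i.e., for every prime $q$ there is an integer $t$ with $q \nmid f(t)$), then there are infinitely many positive integers $t$ for which $f_1(t),\dots,f_k(t)$ are simultaneously prime. *)

(* Defs.v *)
From HB Require Import structures.
From mathcomp Require Import all_boot all_order all_algebra.
From mathcomp Require Import reals.
Set Implicit Arguments. Unset Strict Implicit. Unset Printing Implicit Defensive.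
Import Order.TTheory GRing.Theory Num.Theory.

Local Open Scope ring_scope.

Definition int_prime (z : int) : bool := (0 < z) && prime `|z|%N.

(* A linear polynomial a*t + b in Z[t] is encoded by the pair (a, b). *)
Definition lin_eval (ab : int * int) (t : int) : int := ab.1 * t + ab.2.

Definition dickson_conjecture : Prop :=
  forall s : seq (int * int),
    all (fun ab => 0 < ab.1) s ->
    (forall q : nat, prime q ->
       exists t : int, ~~ (q%:Z %| \prod_(ab <- s) lin_eval ab t)%Z) ->
    forall N : nat, exists t : nat,
      (N < t)%N /\ all (fun ab => int_prime (lin_eval ab t%:Z)) s.

Definition totient_ratio (R : realType) (p : nat) : R :=
  (totient p.+1)%:R / (totient p)%:R.

(* Main.v *)
Require Import Defs.
From HB Require Import structures.
From mathcomp Require Import all_boot all_order all_algebra.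
From mathcomp Require Import reals.
From mathcomp Require Import cyclic.
From mathcomp Require Import ring lra zify.
Import Order.TTheory GRing.Theory Num.Theory.
Local Open Scope ring_scope.

Lemma totient_nat_formula n : (0 < n)%N ->
  (totient n * \prod_(p <- primes n) p = n * \prod_(p <- primes n) p.-1)%N.
Proof.
move=> n0; rewrite totientE //.
have En : n = (\prod_(p <- primes n) p ^ logn p n)%N.
  by rewrite {1}(prod_prime_decomp n0) prime_decompE big_map.
rewrite [X in _ = (X * _)%N]En -!big_split /=.

rewrite big_seq [RHS]big_seq; apply: eq_bigr => p.
rewrite -logn_gt0; case: (logn p n) => // e _ /=.
by rewrite expnS; ring.
Qed.

Definition PL (R : realType) (l : seq nat) : R := \prod_(i <- l) (1 - (i%:R)^-1).

Lemma PL_frac (R : realType) l : all prime l ->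
  PL R l = (\prod_(i <- l) i.-1)%:R / (\prod_(i <- l) i)%:R.
Proof.
rewrite /PL !natr_prod -prodfV -big_split /=.
elim: l => [|p l IH]; first by rewrite !big_nil.
case/andP => pp /IH {}IH; rewrite !big_cons IH; congr (_ * _).
have p0 : (p%:R : R) != 0 by rewrite pnatr_eq0 -lt0n prime_gt0.
rewrite -subn1 natrB ?prime_gt0 //.
by rewrite mulrBl divff // mul1r.
Qed.

Lemma totient_ratio_PL (R : realType) n : (0 < n)%N ->
  (totient n)%:R / n%:R = PL R (primes n).
Proof.
move=> n0; rewrite PL_frac; last by apply/allP => p; rewrite mem_primes => /andP[].
have := @totient_nat_formula n n0 => /(congr1 (fun k => k%:R : R)); rewrite !natrM => E.
have n0' : (n%:R : R) != 0 by rewrite pnatr_eq0 -lt0n.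
have P0 : ((\prod_(p <- primes n) p)%:R : R) != 0.
  rewrite pnatr_eq0 -lt0n big_seq prodn_cond_gt0 // => p.
  by rewrite mem_primes => /andP[/prime_gt0].
by apply/eqP; rewrite eqr_div // E mulrC.
Qed.
Definition Hs (R : realType) n : R := \sum_(0 <= m < n) (m.+1)%:R^-1.

Lemma harm (R : realType) j : j%:R / 2 <= Hs R (2 ^ j).
Proof.
elim: j => [|j IH]; first by rewrite mul0r /Hs big_nat1 /= invr1 ler01.
rewrite /Hs (@big_cat_nat _ _ _ (2 ^ j)) //=; last by rewrite leq_exp2l.
have H2 : (2 ^ j.+1 = 2 ^ j + 2 ^ j)%N by rewrite expnS; lia.
have P : 0 < (2 ^ j.+1)%:R :> R by rewrite ltr0n expn_gt0.
have L : (2 ^ j.+1)%:R^-1 *+ (2 ^ j.+1 - 2 ^ j) <=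
          \sum_(2 ^ j <= i < 2 ^ j.+1) ((i.+1)%:R^-1 : R).
  rewrite -sumr_const_nat; apply: ler_sum_nat => i /andP[_ hi].
  rewrite lef_pV2 ?posrE ?ltr0n ?expn_gt0 // ler_nat.
  exact: hi.
have E : (2 ^ j.+1)%:R^-1 *+ (2 ^ j.+1 - 2 ^ j) = 2^-1 :> R.
  rewrite H2 addnK -mulr_natr.
  have Q : 0 < (2 ^ j)%:R :> R by rewrite ltr0n expn_gt0.
  rewrite natrD; field; lra.
rewrite E in L; rewrite -/(Hs R (2 ^ j)) in IH *.
rewrite -natr1 mulrDl mul1r; lra.
Qed.
Lemma prime_dvd_fact p k : prime p -> (p %| k`!)%N = (p <= k)%N.
Proof.
move=> pp; apply/idP/idP; last by move=> pk; apply: dvdn_fact; rewrite prime_gt0.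
elim: k => [|k IH]; first by rewrite fact0 dvdn1 => /eqP p1; rewrite p1 in pp.
rewrite factS Euclid_dvdM // => /orP[/dvdn_leq -> //| /IH]; lia.
Qed.

Lemma primes_perm a b : (0 < a)%N -> (0 < b)%N ->
  (forall p, prime p -> (p %| a)%N = (p %| b)%N) -> perm_eq (primes a) (primes b).
Proof.
move=> a0 b0 H; apply: uniq_perm; rewrite ?primes_uniq // => p.
rewrite !mem_primes a0 b0 /=; case pp: (prime p) => //=; exact: H.
Qed.

Lemma sum_tot_fact k :
  (\sum_(0 <= m < k) totient (k`! * (k`! %/ m.+1)) <= k`! * k`!)%N.
Proof.
set N := (k`! * k`!)%N.
have N0 : (0 < N)%N by rewrite muln_gt0 fact_gt0.
have dv : forall m, (m < k)%N -> (m.+1 %| k`!)%N by move=> m mk; apply: dvdn_fact.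
rewrite -[X in (_ <= X)%N](sum_totient_dvd N). rewrite -(big_mkord (fun d => d %| N)%N totient). rewrite -[X in (_ <= X)%N]big_filter.
rewrite -(big_map (fun m => k`! * (k`! %/ m.+1))%N xpredT totient).
apply: (uniq_sub_le_big leqnn (fun x y => leq_addr y x)).
- rewrite map_inj_in_uniq ?iota_uniq // => a b.
  rewrite !mem_index_iota => /andP[_ ak] /andP[_ bk] /eqP.
  rewrite eqn_pmul2l ?fact_gt0 // => /eqP E.
  have ea := divnK (dv a ak); have eb := divnK (dv b bk).
  have : (k`! %/ a.+1 * a.+1 = k`! %/ a.+1 * b.+1)%N by rewrite {2}E ea eb.
  move/eqP; rewrite eqn_pmul2l; first by move/eqP => [].
  by rewrite divn_gt0 // ?fact_gt0 // dvdn_leq ?fact_gt0 // dv.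
- by rewrite filter_uniq // iota_uniq.
- move=> d /mapP [m]; rewrite mem_index_iota => /andP[_ mk] ->.
  have dd : (k`! * (k`! %/ m.+1) %| N)%N.
    by rewrite /N dvdn_mul // -{2}(divnK (dv m mk)) dvdn_mulr.
  rewrite mem_filter dd mem_index_iota /=; rewrite ltnS; exact: dvdn_leq.
Qed.

Lemma Afact (R : realType) k : PL R (primes k`!) * Hs R k <= 1.
Proof.
set c := PL R (primes k`!).
have f0 := fact_gt0 k.
have key : forall m, (0 <= m < k)%N ->
    (totient (k`! * (k`! %/ m.+1)))%:R = c * ((k`! * k`!)%:R / m.+1%:R) :> R.
  move=> m /andP[_ mk].
  have dv : (m.+1 %| k`!)%N by apply: dvdn_fact.
  have x0 : (0 < k`! %/ m.+1)%N by rewrite divn_gt0 // dvdn_leq.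
  have d0 : (0 < k`! * (k`! %/ m.+1))%N by rewrite muln_gt0 f0.
  have E := totient_ratio_PL R _ d0.
  have Ec : PL R (primes (k`! * (k`! %/ m.+1))) = c.
    apply: perm_big; apply: primes_perm => // p pp.
    rewrite Euclid_dvdM //; apply/orP/idP => [[//|]|]; last by left.
    by move=> h; apply: dvdn_trans h _; rewrite -{2}(divnK dv) dvdn_mulr.
  rewrite Ec in E.
  have dn : ((k`! * (k`! %/ m.+1))%:R : R) != 0 by rewrite pnatr_eq0 -lt0n.
  have -> : (k`! * k`!)%:R / (m.+1)%:R = (k`! * (k`! %/ m.+1))%:R :> R.
    by rewrite natrM [in RHS]natrM natr_div ?mulrA // unitfE pnatr_eq0.
  by rewrite -E mulfVK.
have S := sum_tot_fact k.
rewrite -(ler_nat R) natr_sum in S.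
rewrite (eq_big_nat _ _ key) -mulr_sumr in S.
have N0 : 0 < (k`! * k`!)%:R :> R by rewrite ltr0n muln_gt0 f0.
have E2 : \sum_(0 <= i < k) ((k`! * k`!)%:R / (i.+1)%:R) = (k`! * k`!)%:R * Hs R k :> R.
  by rewrite /Hs mulr_sumr.
rewrite E2 in S.
rewrite mulrA (mulrC c) -mulrA in S.
by rewrite -(ler_pM2l N0) mulr1.
Qed.

Section SecE.
Set Implicit Arguments. Unset Strict Implicit.

Definition pl a b := [seq i <- iota a (b - a) | prime i].

Lemma primes_fact_pl k : perm_eq (primes k`!) (pl 0 k.+1).
Proof.
apply: uniq_perm; rewrite ?primes_uniq ?filter_uniq ?iota_uniq // => p.
rewrite mem_primes mem_filter mem_iota fact_gt0 /= subn0 add0n.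
by case pp: (prime p) => //=; rewrite prime_dvd_fact.
Qed.

Lemma pl_cat a b c : (a <= b)%N -> (b <= c)%N -> pl a c = pl a b ++ pl b c.
Proof.
move=> ab bc; rewrite /pl -filter_cat.
have -> : (c - a = (b - a) + (c - b))%N by lia.
by rewrite iotaD; have -> : (a + (b - a) = b)%N by lia.
Qed.

Lemma pl_S a b : (a <= b)%N -> pl a b.+1 = pl a b ++ (if prime b then [:: b] else [::]).
Proof.
move=> ab; rewrite (pl_cat ab (leqnSn b)) /pl subSnn /=.
by case: (prime b).
Qed.

Lemma pl_prime a b : all prime (pl a b).
Proof. by apply/allP => p; rewrite mem_filter => /andP[]. Qed.

Lemma PL_cat (R : realType) l1 l2 : PL R (l1 ++ l2) = PL R l1 * PL R l2.
Proof. by rewrite /PL big_cat. Qed.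

Lemma PL_bounds (R : realType) l : all prime l -> 0 < PL R l <= 1.
Proof.
elim: l => [|p l IH]; first by rewrite /PL big_nil ltr01 lexx.
case/andP => pp /IH /andP[h1 h2]; rewrite /PL big_cons -/(PL R l).
have p1 : 1 < (p%:R : R) by rewrite ltr1n prime_gt1.
have q0 : 0 < (p%:R : R)^-1 by rewrite invr_gt0; lra.
have q1 : (p%:R : R)^-1 < 1 by rewrite invf_lt1; lra.
apply/andP; split; first by apply: mulr_gt0; lra.
by rewrite -[1]mulr1; apply: ler_pM; lra.
Qed.

Lemma B_small (R : realType) a (eps : R) : 0 < eps ->
  exists b, (a <= b)%N /\ PL R (pl a b) < eps.
Proof.
move=> e0.
have /andP[c0 _] := PL_bounds R (pl_prime 0 a).
set c := PL R (pl 0 a) in c0 *.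
set y := 2 / (c * eps).
have y0 : 0 <= y by rewrite /y divr_ge0 // ltW // mulr_gt0.
have yce : y * (c * eps) = 2 by rewrite /y mulfVK // mulf_neq0 // gt_eqF.
have yb := archi_boundP y0.
set j := maxn a (Num.Def.archi_bound y).
have jy : y < j%:R by apply: lt_le_trans yb _; rewrite ler_nat leq_maxr.
have aj : (a <= j)%N by rewrite leq_maxl.
exists (2 ^ j).+1; split.
  by apply: leq_trans aj _; apply: ltnW; apply: ltnW; apply: ltn_expl.
have H := Afact R (2 ^ j).
rewrite /PL (perm_big _ (primes_fact_pl _)) -/(PL R _) in H.
rewrite (pl_cat (leq0n a)) ?PL_cat -/c in H; last first.
  by apply: leq_trans aj _; apply: ltnW; apply: ltnW; apply: ltn_expl.
have hj := harm R j.
have /andP[B0 _] := PL_bounds R (pl_prime a (2 ^ j).+1).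
set B := PL R _ in H B0 *.
have ce : 0 < c * eps by apply: mulr_gt0.
have cB : 0 < c * B by apply: mulr_gt0.
have : c * B * (j%:R / 2) <= 1.
  by apply: le_trans H; rewrite ler_pM2l.
move=> h; rewrite ltNge; apply/negP => hB.
have j0 : 0 < (j%:R : R) by apply: le_lt_trans jy.
have h1 : c * eps * (j%:R / 2) <= c * B * (j%:R / 2).
  by rewrite ler_pM2r ?divr_gt0 // ler_pM2l.
have h2 : c * eps * (y / 2) < c * eps * (j%:R / 2).
  by rewrite ltr_pM2l // ltr_pM2r // invr_gt0 ltr0n.
have h3 : c * eps * (y / 2) = 1 by rewrite mulrA (mulrC _ y) yce; field.
lra.
Qed.

Lemma ivt (R : realType) (x eps : R) K0 : 0 <= x <= 3^-1 -> 0 < eps ->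
  (0 < K0)%N -> (K0%:R)^-1 < eps ->
  exists j, (K0 <= j)%N /\ `|PL R (pl K0 j) / 3 - x| < eps.
Proof.
move=> /andP[x0 x3] e0 K00 Ke.
have [b [Kb Bb]] := B_small K0 e0.
pose P j := (K0 <= j)%N && (PL R (pl K0 j) / 3 < x + eps).
have exP : exists j, P j.
  exists b; rewrite /P Kb /=.
  have /andP[B0 _] := PL_bounds R (pl_prime K0 b).
  lra.
case: (ex_minnP exP) => m /andP[Km Pm] minm.
exists m; split => //.
have K0' : (0 < (K0%:R : R)) by rewrite ltr0n.
have [Klt | Kge] := ltnP K0 m; last first.
  have Em : m = K0 by apply/eqP; rewrite eqn_leq Kge Km.
  rewrite Em /pl subnn /= /PL big_nil in Pm *.
  rewrite ger0_norm; lra.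
case: m Km Pm minm Klt => // m' Km Pm minm Klt.
have Km' : (K0 <= m')%N by [].
have nP : ~~ P m'.
  apply/negP => /minm; lia.
rewrite /P Km' /= -leNgt in nP.
rewrite pl_S // PL_cat in Pm *.
have /andP[B0 B1] := PL_bounds R (pl_prime K0 m').
set B := PL R (pl K0 m') in nP Pm B0 B1 *.
have m0 : 0 < (m'%:R : R) by rewrite ltr0n; lia.
have mK : (m'%:R : R)^-1 <= (K0%:R)^-1.
  by rewrite lef_pV2 ?posrE // ler_nat.
have mi0 : 0 < (m'%:R : R)^-1 by rewrite invr_gt0.
have low : B - (m'%:R)^-1 <= B * PL R (if prime m' then [:: m'] else [::]).
  case: (prime m'); rewrite /PL ?big_cons big_nil ?mulr1; last by lra.
  rewrite mulrBr mulr1 lerD2l lerN2 -{2}[(m'%:R)^-1]mul1r.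
  by rewrite ler_pM2r.
rewrite ltr_norml; apply/andP; split; last by lra.
lra.
Qed.


Lemma prime_dvd_prodl q l : prime q -> all prime l ->
  (q %| \prod_(i <- l) i)%N -> q \in l.
Proof.
move=> pq; elim: l => [|p l IH]; first by rewrite big_nil dvdn1 => _ /eqP q1; rewrite q1 in pq.
case/andP => pp al; rewrite big_cons Euclid_dvdM // in_cons => /orP[].
  by rewrite dvdn_prime2 // => ->.
by move=> /(IH al) ->; rewrite orbT.
Qed.

Lemma tot_prod l : uniq l -> all prime l ->
  totient (\prod_(i <- l) i) = (\prod_(i <- l) i.-1)%N.
Proof.
elim: l => [|p l IH]; first by rewrite !big_nil.
case/andP => pl ul /andP[pp al]; rewrite !big_cons totient_coprime.
  by rewrite totient_prime // IH.
rewrite prime_coprime //; apply/negP => /(prime_dvd_prodl pp al) h.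
by rewrite h in pl.
Qed.

Lemma admissible_nat (M q : nat) : (6 %| M)%N -> (0 < M)%N -> prime q ->
  exists t : nat, (0 < t)%N /\ ~~ (q %| (M * t - 1) * ((M * t + 1) * t))%N.
Proof.
move=> M6 M0 pq.
have q1 : ~~ (q %| 1)%N by rewrite Euclid_dvd1.
have M2 : (2 %| M)%N by apply: dvdn_trans M6.
have M3 : (3 %| M)%N by apply: dvdn_trans M6.
case qM: (q %| M)%N.
  exists 1%N; split => //; rewrite muln1 muln1 Euclid_dvdM //; apply/negP => /orP[] h.
    have : (q %| (M - 1) + 1)%N by have -> : (M - 1 + 1 = M)%N by lia.
    by rewrite dvdn_addr // (negbTE q1).
  by move: h; rewrite dvdn_addr // (negbTE q1).
have [a aq] := Bezoutl M (prime_gt0 pq).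
have cq : coprime q M by rewrite prime_coprime // qM.
rewrite (eqP cq) => da.
have a0 : (0 < a)%N.
  case: a aq da => // _; rewrite mul0n addn0 => h; by rewrite h in q1.
exists (2 * a)%N; split; first lia.
have E1 : (M * (2 * a) + 1 + 1 = 2 * (1 + a * M))%N by lia.
have E2 : (M * (2 * a) - 1 + 3 = 2 * (1 + a * M))%N by lia.
have E3 : (2 + (2 * a) * M = 2 * (1 + a * M))%N by lia.
have D : (q %| 2 * (1 + a * M))%N by apply: dvdn_mull.
rewrite !Euclid_dvdM //; apply/negP => /or3P[] h.
- move: D; rewrite -E2 dvdn_addr //.
  rewrite dvdn_prime2 // => /eqP q3; by rewrite q3 M3 in qM.
- by move: D; rewrite -E1 (dvdn_addr _ h) => h1; rewrite h1 in q1.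
- have q2' : (q %| 2)%N.
    case/orP: h => // h; move: D; rewrite -E3 dvdn_addl //.
    by rewrite -mulnA dvdn_mull // dvdn_mulr.
  move: q2'; rewrite dvdn_prime2 // => /eqP q2; by rewrite q2 M2 in qM.
Qed.

End SecE.

Lemma int_prime_nat n : int_prime (Posz n) = prime n.
Proof. by rewrite /int_prime absz_nat ltz_nat; case: n. Qed.

Lemma posz_expand (M n : nat) : (0 < M * n)%N ->
  (M%:Z * n%:Z + -1) * ((M%:Z * n%:Z + 1) * ((1 * n%:Z + 0) * 1))
    = Posz ((M * n - 1) * ((M * n + 1) * n))%N.
Proof.
move=> h; rewrite PoszM (PoszM (M * n + 1)) PoszD -subzn // PoszM; ring.
Qed.

Lemma big_inv_lt (R : realType) (eps : R) n : 0 < eps ->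
  (Num.Def.archi_bound (2 / eps) <= n)%N -> (n%:R)^-1 < eps / 2.
Proof.
move=> e0 hn.
have h0 : 0 <= 2 / eps by rewrite divr_ge0 // ltW.
have h1 := archi_boundP h0.
have h2 : 2 / eps < n%:R by apply: lt_le_trans h1 _; rewrite ler_nat.
have n0 : 0 < (n%:R : R) by apply: le_lt_trans h2.
rewrite invf_plt ?posrE ?divr_gt0 // invf_div //.
Qed.

Lemma mem_pl i a b : i \in pl a b -> [/\ prime i, (a <= i)%N & (i < b)%N].
Proof. rewrite mem_filter mem_iota => /andP[-> /andP[h1 h2]]; split => //; lia. Qed.

Lemma final_bound (R : realType) (B q T x eps : R) : 0 <= B <= 1 -> 1 <= q -> 2 <= T ->
  T^-1 < eps / 2 -> `|B / 3 - x| < eps / 2 ->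
  `|2 * B * q * (T - 1) / (6 * q * T - 2) - x| < eps.
Proof.
move=> /andP[B0 B1] q1 T2 Te Hx.
have D0 : 0 < 6 * q * T - 2 by nra.
have T0 : 0 < T by lra.
have Ed : B / 3 - 2 * B * q * (T - 1) / (6 * q * T - 2) = B * (6 * q - 2) / (3 * (6 * q * T - 2)).
  by field; rewrite gt_eqF.
set D := 6 * q * T - 2 in D0 Ed *.
have d0 : 0 <= B * (6 * q - 2) / (3 * D).
  by apply: divr_ge0; [apply: mulr_ge0 => //; lra | lra].
have d1 : B * (6 * q - 2) / (3 * D) <= T^-1.
  rewrite ler_pdivrMr; last by lra.
  have h1 : B * (6 * q - 2) <= 6 * q - 2 by nra.
  have h2 : (6 * q - 2) <= T^-1 * (3 * D).
    rewrite -(ler_pM2l T0) mulrA mulfV ?gt_eqF // mul1r /D; nra.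
  lra.
move: Hx; rewrite !ltr_norml => /andP[a1 a2].
apply/andP; split; lra.
Qed.

Theorem theorem3 (R : realType) :
  dickson_conjecture ->
  forall x : R, 0 <= x <= 3^-1 ->
  forall eps : R, 0 < eps ->
  exists p : nat, [/\ prime p, prime p.+2 & `|totient_ratio R p - x| < eps].
Proof.
move=> DC x hx eps e0.
have e2 : 0 < eps / 2 by rewrite divr_gt0.
set K0 := maxn 5 (Num.Def.archi_bound (2 / eps)).
have K5 : (5 <= K0)%N by rewrite leq_maxl.
have K00 : (0 < K0)%N by lia.
have Kinv : (K0%:R)^-1 < eps / 2 by apply: big_inv_lt => //; rewrite leq_maxr.
have [j [Kj Hj]] := ivt hx e2 K00 Kinv.
set l := pl K0 j in Hj.
have lp : all prime l by apply: pl_prime.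
have lu : uniq l by rewrite filter_uniq // iota_uniq.
set Q := (\prod_(i <- l) i)%N.
have Q0 : (0 < Q)%N.
  by rewrite /Q big_seq prodn_cond_gt0 // => i /mem_pl [/prime_gt0].
set M := (6 * Q)%N.
have M0 : (0 < M)%N by rewrite /M muln_gt0 Q0.
have M6 : (6 %| M)%N by rewrite /M dvdn_mulr.
set Nb := maxn j (Num.Def.archi_bound (2 / eps)).
have Hpos : all (fun ab : int * int => 0 < ab.1) [:: (M%:Z, -1); (M%:Z, 1); (1, 0)].
  by rewrite /= ltz_nat M0.
have Hadm : forall q : nat, prime q -> exists t : int,
    ~~ (q%:Z %| \prod_(ab <- [:: (M%:Z, -1); (M%:Z, 1); (1, 0)]) lin_eval ab t)%Z.
  move=> q pq; have [n [n0 hn]] := admissible_nat M6 M0 pq.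
  exists n%:Z; rewrite !big_cons big_nil /lin_eval /=.
  have -> : (M%:Z * n%:Z + -1) * ((M%:Z * n%:Z + 1) * ((1 * n%:Z + 0) * 1))
      = Posz ((M * n - 1) * ((M * n + 1) * n))%N.
    by apply: posz_expand; rewrite muln_gt0 M0.
  by rewrite dvdzE /=.
have [t [tN ht]] := DC _ Hpos Hadm Nb.
move: ht => /= /andP[h1 /andP[h2 /andP[h3 _]]].
rewrite /lin_eval /= mul1r addr0 int_prime_nat in h3.
have t0 : (0 < t)%N by apply: prime_gt0.
have Mt1 : (1 <= M * t)%N by rewrite muln_gt0 M0.
have E1 : M%:Z * t%:Z + -1 = Posz (M * t - 1)%N by rewrite -subzn // PoszM.
have E2 : M%:Z * t%:Z + 1 = Posz (M * t + 1)%N by rewrite PoszD PoszM.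
rewrite /lin_eval /= E1 int_prime_nat in h1.
rewrite /lin_eval /= E2 int_prime_nat in h2.
exists (M * t - 1)%N; split => //.
  by have -> : ((M * t - 1).+2 = M * t + 1)%N by lia.
have tj : (j < t)%N by apply: leq_ltn_trans tN; rewrite leq_maxl.
have tinv : (t%:R : R)^-1 < eps / 2.
  by apply: big_inv_lt => //; apply: ltnW; apply: leq_ltn_trans tN; rewrite leq_maxr.
have nQ : forall r, prime r -> (r %| Q)%N -> (K0 <= r < j)%N.
  by move=> r pr /(prime_dvd_prodl pr lp) /mem_pl [_ -> ->].
have EM : M = (6 * Q)%N by [].
have EQ : Q = (\prod_(i <- l) i)%N by [].
clearbody K0 Nb M Q.
have cop6 : coprime 6 Q.
  rewrite (_ : 6 = 2 * 3)%N // coprimeMl.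
  rewrite (prime_coprime _ (isT : prime 2)) (prime_coprime _ (isT : prime 3)).
  apply/andP; split; apply/negP => /nQ h.
    by case/andP: (h isT) => h' _; have := leq_trans K5 h'.
  by case/andP: (h isT) => h' _; have := leq_trans K5 h'.
have copt : coprime M t.
  rewrite coprime_sym (prime_coprime _ h3) EM (Euclid_dvdM _ _ h3).
  apply/negP => /orP[].
    move/dvdn_leq => /(_ isT) t6.
    have Kt : (K0 < t)%N by apply: leq_ltn_trans Kj tj.
    have t6' : t = 6%N by apply/eqP; rewrite eqn_leq t6 /=; apply: leq_ltn_trans K5 Kt.
    by rewrite t6' in h3.
  move/(nQ _ h3) => /andP[_ h]. by have := ltn_trans h tj; rewrite ltnn.
have totM : totient (M * t) = (2 * \prod_(i <- l) i.-1 * t.-1)%N.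
  rewrite totient_coprime // (totient_prime h3) EM totient_coprime //.
  by rewrite EQ tot_prod.
have Ep : (M * t - 1).+1 = (M * t)%N by rewrite subn1 prednK.
rewrite /totient_ratio Ep totM (totient_prime h1).
have EB := PL_frac R l lp; rewrite -EQ in EB.
set a := (\prod_(i <- l) i.-1)%N in EB *.
have Qn0 : (Q%:R : R) != 0 by rewrite pnatr_eq0 -lt0n.
have Ea : (a%:R : R) = PL R l * Q%:R by rewrite EB mulfVK.
have M6Q : (6 <= M)%N by rewrite EM leq_pmulr.
have Mt2 : (2 <= M * t)%N.
  by apply: (@leq_trans 6) => //; apply: leq_trans M6Q _; rewrite leq_pmulr.
have Eden : (((M * t - 1).-1)%:R : R) = 6 * Q%:R * t%:R - 2.
  have -> : ((M * t - 1).-1 = M * t - 2)%N by rewrite -!subn1 -subnDA.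
  by rewrite natrB // natrM EM natrM.
have Enum : (((2 * a * t.-1)%N)%:R : R) = 2 * (PL R l) * Q%:R * (t%:R - 1).
  by rewrite !natrM Ea -subn1 natrB // mulrA.
rewrite Enum Eden; apply: final_bound => //.
- by have /andP[h0 ->] := PL_bounds R lp; rewrite ltW.
- by rewrite ler1n.
- by rewrite ler_nat prime_gt1.
Qed.
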